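(* For $0<\alpha\le\delta<\infty$, the space $P_{\alpha,\delta}=\{p\in\mathcal M_1^+: a(p)\in X_{\alpha,\delta}\}$, equipped with the metric induced by the total variation norm $\|p-q\|_1=\sum_k|p_k-q_k|$, is compact and convex.
   Context: $\mathcal M_1^+$ is the set of probability measures on $\mathbb N_0$, identified with nonnegative sequences summing to $1$. For $p\in\mathcal M_1^+$, $a(p)_k=\frac{1}{k+1}\sum_{\ell\ge k}\binom{\ell}{k}p_\ell\in[0,\infty]$. $X_{\alpha,\delta}$ is the set of real sequences $a=(a_k)_{k\ge0}$ with $a_0=1$, $a_1=\alpha$, $0\le a_k\le\delta^k$ for $k\ge2$. *)

(* Defs.v *)
From Stdlib Require Import Reals Lra List.
From Coquelicot Require Import Coquelicot.
Open Scope R_scope.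

(* Probability measures on N_0, identified with nonnegative sequences summing to 1. *)
Definition prob (p : nat -> R) : Prop :=
  (forall k, 0 <= p k) /\ is_series p 1.

(* a(p)_k = 1/(k+1) * sum_{l >= k} C(l,k) p_l  in [0, +oo]
   (index l = j + k; the partial sums are nondecreasing for p >= 0,
    so Lim_seq is their supremum in Rbar). *)
Definition a_of (p : nat -> R) (k : nat) : Rbar :=
  Rbar_mult (Finite (/ (INR k + 1)))
    (Lim_seq (sum_n (fun j => Binomial.C (j + k)%nat k * p (j + k)%nat))).

Definition in_X (alpha delta : R) (a : nat -> Rbar) : Prop :=
  a 0%nat = Finite 1 /\ a 1%nat = Finite alpha /\
  (forall k, (2 <= k)%nat -> Rbar_le (Finite 0) (a k) /\ Rbar_le (a k) (Finite (delta ^ k))).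

Definition P_ad (alpha delta : R) (p : nat -> R) : Prop :=
  prob p /\ in_X alpha delta (a_of p).

Definition l1ball (p : nat -> R) (eps : R) (q : nat -> R) : Prop :=
  exists s, is_series (fun k => Rabs (p k - q k)) s /\ s < eps.

Definition l1_open (U : (nat -> R) -> Prop) : Prop :=
  forall p, U p -> exists eps, 0 < eps /\ forall q, l1ball p eps q -> U q.

Definition l1_compact (S : (nat -> R) -> Prop) : Prop :=
  forall (I : Type) (U : I -> (nat -> R) -> Prop),
    (forall i, l1_open (U i)) ->
    (forall p, S p -> exists i, U i p) ->
    exists l : list I, forall p, S p -> exists i, In i l /\ U i p.

Definition convex_set (S : (nat -> R) -> Prop) : Prop :=
  forall p q t, S p -> S q -> 0 <= t <= 1 -> S (fun k => t * p k + (1 - t) * q k).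

(* Main.v *)
Require Import Defs.
From Stdlib Require Import Reals Lra Lia List FunctionalExtensionality.
From Coquelicot Require Import Coquelicot.
Open Scope R_scope.
From HB Require Import structures.
From mathcomp Require all_boot all_order all_algebra.
From mathcomp Require all_classical all_reals topology normedtype.
From mathcomp Require Rstruct Rstruct_topology.
Module Topo.
Import all_boot all_order all_algebra all_classical all_reals topology normedtype Rstruct Rstruct_topology.
Import Order.TTheory GRing.Theory Num.Theory.
Import numFieldNormedType.Exports.
Import ArrowAsProduct.
Local Open Scope classical_set_scope.

Lemma nbhs_fin (p : nat -> R) (N : nat) (eta : R) : Rlt 0 eta ->
  nbhs p [set q : nat -> R | forall k, (k < N)%N -> Rlt (Rabs (Rminus (q k) (p k))) eta].
Proof.
move=> he; elim: N => [|N IH].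
  by apply: filterS (@filterT _ (nbhs p) _) => q _ k.
have hN : nbhs p [set q : nat -> R | Rlt (Rabs (Rminus (q N) (p N))) eta].
  have := @proj_continuous nat (fun _ => R) N p.
  move=> /(_ (ball (p N) eta)) H.
  have /H : nbhs (proj N p) (ball (p N) eta) by apply: nbhsx_ballx; apply/RltP.
  move=> HH; apply: (@filterS _ (nbhs p) _ _ _ _ HH) => q /=. rewrite /ball /= /proj -RabsE Rabs_minus_sym.
  by move/RltP.
apply: filterS (filterI IH hN) => q [h1 h2] k; rewrite ltnS leq_eqVlt.
by case/orP => [/eqP -> //|]; apply: h1.
Qed.


Lemma in_seq_In (T : eqType) (x : T) (s : seq T) : x \in s -> List.In x s.
Proof.
elim: s => //= y s IH; rewrite in_cons => /orP [/eqP ->|/IH]; by [left|right].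
Qed.


HB.instance Definition _ := isPointed.Build (nat -> R) (fun _ => 0%R).

Lemma topo_compact (P : (nat -> R) -> Prop) :
  (forall q, P q -> forall k, Rle 0 (q k) /\ Rle (q k) 1) ->
  (forall p, (forall N eta, Rlt 0 eta -> exists q, P q /\
      forall k, lt k N -> Rlt (Rabs (Rminus (q k) (p k))) eta) -> P p) ->
  forall (I : Type) (U : I -> (nat -> R) -> Prop),
  (forall p, P p -> exists i N eta, Rlt 0 eta /\ forall q, P q ->
      (forall k, lt k N -> Rlt (Rabs (Rminus (q k) (p k))) eta) -> U i q) ->
  exists l : list I, forall p, P p -> exists i, List.In i l /\ U i p.
Proof.
move=> Hbd Hcl I U Hcov.
case: (pselect (inhabited I)) => [[i0]|nI]; last first.
  exists nil => p Pp; exfalso; apply: nI.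
  by have [i _] := Hcov p Pp; exact: (inhabits i).
have Hsel : forall x : nat -> R, exists i : I, P x -> exists N eta, Rlt 0 eta /\
    forall q, P q -> (forall k, lt k N -> Rlt (Rabs (Rminus (q k) (x k))) eta) -> U i q.
  move=> x; case: (pselect (P x)) => Px.
    by have [i Hi] := Hcov x Px; exists i => _.
  by exists i0 => /Px.
pose sel x := projT1 (cid (Hsel x)).
have Hsel' x : P x -> exists N eta, Rlt 0 eta /\
    forall q, P q -> (forall k, lt k N -> Rlt (Rabs (Rminus (q k) (x k))) eta) -> U (sel x) q.
  exact: (projT2 (cid (Hsel x))).
pose A := [set q : nat -> R | P q].
have Acomp : compact A.
  apply: (subclosed_compact _ (tychonoff (fun _ : nat => @segment_compact R 0%R 1%R))).
    move=> p Hp; apply: Hcl => N eta he.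
    have [q [Aq Bq]] := Hp _ (nbhs_fin p N eta he).
    by exists q; split => // k /ssrnat.ltP; apply: Bq.
  move=> q Aq k /=; have [h1 h2] := Hbd q Aq k.
  by rewrite in_itv /=; apply/andP; split; apply/RleP.
rewrite compact_cover in Acomp.
pose f := (fun x : nat -> R => interior [set q | P q -> U (sel x) q]).
have Hop : forall i, A i -> open (f i) by move=> i _; apply: open_interior.
have Hcv : A `<=` cover A f.
  move=> p Ap; exists p => //.
  have [N [eta [he H]]] := Hsel' p Ap.
  apply: filterS (nbhs_fin p N eta he) => q Hq Pq; apply: H => // k /ssrnat.ltP; apply: Hq.
have [D' _ HD'] := Acomp (nat -> R) A f Hop Hcv.
exists (List.map sel (finmap.enum_fset D')) => p Pp.
have [x xD' Hx] := HD' p Pp.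
exists (sel x); split; first by apply: List.in_map; apply: in_seq_In.
by apply: (interior_subset Hx).
Qed.

End Topo.

Open Scope R_scope.

Lemma sum_n_SnR (f : nat -> R) n : sum_n f (S n) = sum_n f n + f (S n).
Proof. rewrite sum_Sn; reflexivity. Qed.

Lemma sum_n_nonneg (f : nat -> R) n : (forall j, 0 <= f j) -> 0 <= sum_n f n.
Proof.
intros H; induction n as [|n IH]. rewrite sum_O; auto.
rewrite sum_n_SnR; specialize (H (S n)); lra.
Qed.

Lemma sum_n_mono (f : nat -> R) m n : (forall j, 0 <= f j) -> (m <= n)%nat -> sum_n f m <= sum_n f n.
Proof.
intros H Hmn; induction Hmn as [|n Hmn IH]. lra.
rewrite sum_n_SnR; specialize (H (S n)); lra.
Qed.

Lemma series_ge_partial (f : nat -> R) r n : (forall j, 0 <= f j) -> is_series f r -> sum_n f n <= r.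
Proof.
intros H Hs.
assert (Hl : is_lim_seq (fun m => sum_n f (m + n)%nat) r).
{ apply (is_lim_seq_incr_n (sum_n f) n r). exact Hs. }
assert (Hle := is_lim_seq_le (fun _ => sum_n f n) (fun m => sum_n f (m + n)%nat) (sum_n f n) r).
simpl in Hle. apply Hle.
- intros m; apply sum_n_mono; auto; lia.
- apply is_lim_seq_const.
- exact Hl.
Qed.

Lemma lim_le_bound (u : nat -> R) (r B : R) : is_lim_seq u r -> (forall n, u n <= B) -> r <= B.
Proof.
intros Hs Hb.
assert (Hle := is_lim_seq_le u (fun _ => B) r B Hb Hs (is_lim_seq_const B)). exact Hle.
Qed.

Lemma lim_ge_bound (u : nat -> R) (r B : R) : is_lim_seq u r -> (forall n, B <= u n) -> B <= r.
Proof.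
intros Hs Hb.
assert (Hle := is_lim_seq_le (fun _ => B) u B r Hb (is_lim_seq_const B) Hs). exact Hle.
Qed.

Lemma series_le_bound (f : nat -> R) r B : is_series f r -> (forall n, sum_n f n <= B) -> r <= B.
Proof. intros Hs Hb; apply (lim_le_bound (sum_n f)); auto. Qed.

Lemma sum_incr (f : nat -> R) : (forall j, 0 <= f j) -> forall n, sum_n f n <= sum_n f (S n).
Proof. intros H n; apply sum_n_mono; auto. Qed.

Lemma Lim_cases (f : nat -> R) : (forall j, 0 <= f j) ->
  (exists r : R, is_series f r /\ Lim_seq (sum_n f) = Finite r) \/ Lim_seq (sum_n f) = p_infty.
Proof.
intros H.
assert (Hl := Lim_seq_correct _ (ex_lim_seq_incr _ (sum_incr f H))).
destruct (Lim_seq (sum_n f)) as [r| |] eqn:E.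
- left; exists r; split; [exact Hl | reflexivity].
- right; reflexivity.
- exfalso. assert (Hle := is_lim_seq_le (fun _ => 0) (sum_n f) 0 m_infty).
  simpl in Hle. apply Hle. intros n; apply sum_n_nonneg; auto. apply is_lim_seq_const. exact Hl.
Qed.

Lemma bounded_series (f : nat -> R) B : (forall j, 0 <= f j) -> (forall n, sum_n f n <= B) ->
  exists r : R, is_series f r.
Proof.
intros H Hb. destruct (Lim_cases f H) as [[r [Hr _]]|Hp]. eauto.
exfalso. assert (Hl := Lim_seq_correct _ (ex_lim_seq_incr _ (sum_incr f H))).
rewrite Hp in Hl.
assert (Hle := is_lim_seq_le (sum_n f) (fun _ => B) p_infty B Hb Hl (is_lim_seq_const B)).
simpl in Hle. exact Hle.
Qed.

Lemma Rbar_mult_pos_pinf (c : R) : 0 < c -> Rbar_mult (Finite c) p_infty = p_infty.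
Proof.
intros Hc. unfold Rbar_mult, Rbar_mult'.
destruct (Rle_dec 0 c); [|lra]. destruct (Rle_lt_or_eq_dec 0 c r); [reflexivity|lra].
Qed.

Lemma A1 (f : nat -> R) (k : nat) (x : Rbar) : (forall j, 0 <= f j) ->
  Rbar_mult (Finite (/ (INR k + 1))) (Lim_seq (sum_n f)) = x -> x <> p_infty ->
  exists r : R, is_series f r /\ x = Finite (/ (INR k + 1) * r).
Proof.
intros H Hx Hne.
assert (Hk : 0 < / (INR k + 1)). { apply Rinv_0_lt_compat. pose proof (pos_INR k); lra. }
destruct (Lim_cases f H) as [[r [Hr E]]|E]; rewrite E in Hx.
- exists r; split. exact Hr. subst x. reflexivity.
- rewrite Rbar_mult_pos_pinf in Hx; auto. congruence.
Qed.

Lemma C_nonneg n k : 0 <= Binomial.C n k.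
Proof.
unfold Binomial.C. apply Rmult_le_pos. apply pos_INR.
apply Rlt_le, Rinv_0_lt_compat, Rmult_lt_0_compat; apply INR_fact_lt_0.
Qed.

Lemma C_1 j : Binomial.C (j + 1) 1 = INR j + 1.
Proof.
unfold Binomial.C. replace (j + 1 - 1)%nat with j by lia.
replace (j + 1)%nat with (S j) by lia. change (Factorial.fact (S j)) with (S j * Factorial.fact j)%nat. rewrite mult_INR, S_INR.
change (Factorial.fact 1) with 1%nat. change (Factorial.fact 2) with 2%nat. simpl (INR 2). simpl (INR 1). field. apply INR_fact_neq_0.
Qed.

Lemma C_2 j : Binomial.C (j + 2) 2 = (INR j + 2) * (INR j + 1) / 2.
Proof.
unfold Binomial.C. replace (j + 2 - 2)%nat with j by lia.
replace (j + 2)%nat with (S (S j)) by lia. change (Factorial.fact (S (S j))) with (S (S j) * (S j * Factorial.fact j))%nat. rewrite !mult_INR, !S_INR.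
simpl (INR 2). change (Factorial.fact 1) with 1%nat. change (Factorial.fact 2) with 2%nat. simpl (INR 2). simpl (INR 1). field. apply INR_fact_neq_0.
Qed.

Definition near_fin (p q : nat -> R) (N : nat) (eta : R) :=
  forall k, (k < N)%nat -> Rabs (q k - p k) < eta.

Definition in_clos (S : (nat -> R) -> Prop) (p : nat -> R) :=
  forall N eta, 0 < eta -> exists q, S q /\ near_fin p q N eta.

Definition fcont (G : (nat -> R) -> R) (p : nat -> R) :=
  forall eps, 0 < eps -> exists N eta, 0 < eta /\
    forall q, near_fin p q N eta -> Rabs (G q - G p) < eps.

Lemma clos_le S p G B : in_clos S p -> fcont G p -> (forall q, S q -> G q <= B) -> G p <= B.
Proof.
intros Hc Hg Hb. destruct (Rle_dec (G p) B) as [h|h]; auto. exfalso.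
destruct (Hg (G p - B)) as [N [eta [he Hn]]]; [lra|].
destruct (Hc N eta he) as [q [Sq Hq]].
specialize (Hn q Hq). specialize (Hb q Sq).
apply Rabs_def2 in Hn. lra.
Qed.

Lemma clos_ge S p G B : in_clos S p -> fcont G p -> (forall q, S q -> B <= G q) -> B <= G p.
Proof.
intros Hc Hg Hb. destruct (Rle_dec B (G p)) as [h|h]; auto. exfalso.
destruct (Hg (B - G p)) as [N [eta [he Hn]]]; [lra|].
destruct (Hc N eta he) as [q [Sq Hq]].
specialize (Hn q Hq). specialize (Hb q Sq).
apply Rabs_def2 in Hn. lra.
Qed.

Definition G_lin (c : nat -> R) (s M : nat) (q : nat -> R) :=
  sum_n (fun j => c j * q (j + s)%nat) M.

Lemma diff_bound c s p q eta M :
  (forall k, (k <= M + s)%nat -> Rabs (q k - p k) < eta) ->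
  Rabs (G_lin c s M q - G_lin c s M p) <= eta * sum_n (fun j => Rabs (c j)) M.
Proof.
unfold G_lin. induction M as [|M IH]; intros H.
- rewrite !sum_O.
  replace (c 0%nat * q (0 + s)%nat - c 0%nat * p (0 + s)%nat) with (c 0%nat * (q (0+s)%nat - p (0+s)%nat)) by ring.
  rewrite Rabs_mult. assert (h := H (0 + s)%nat ltac:(lia)). pose proof (Rabs_pos (c 0%nat)).
  nra.
- rewrite !sum_n_SnR.
  replace (sum_n (fun j => c j * q (j + s)%nat) M + c (S M) * q (S M + s)%nat -
     (sum_n (fun j => c j * p (j + s)%nat) M + c (S M) * p (S M + s)%nat))
   with ((sum_n (fun j => c j * q (j + s)%nat) M - sum_n (fun j => c j * p (j + s)%nat) M)
        + c (S M) * (q (S M + s)%nat - p (S M + s)%nat)) by ring.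
  eapply Rle_trans; [apply Rabs_triang|]. rewrite Rabs_mult.
  assert (h1 := IH ltac:(intros k hk; apply H; lia)).
  assert (h := H (S M + s)%nat ltac:(lia)). pose proof (Rabs_pos (c (S M))).
  nra.
Qed.

Lemma lin_cont c s M p : fcont (G_lin c s M) p.
Proof.
intros eps he.
set (A := sum_n (fun j => Rabs (c j)) M).
assert (hA : 0 <= A) by (apply sum_n_nonneg; intros; apply Rabs_pos).
exists (S (M + s)), (eps / (1 + A)). split.
{ apply Rdiv_lt_0_compat; lra. }
intros q Hq. eapply Rle_lt_trans.
{ apply (diff_bound c s p q (eps / (1 + A)) M). intros k hk; apply Hq; lia. }
fold A. apply Rmult_lt_reg_r with (1 + A); [lra|].
unfold Rdiv. replace (eps * / (1 + A) * A * (1 + A)) with (eps * A) by (field; lra). nra.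
Qed.

Lemma coord_cont k p : fcont (fun q => q k) p.
Proof.
intros eps he. exists (S k), eps. split; [exact he|]. intros q Hq. apply Hq. lia.
Qed.

Definition fk (k : nat) (q : nat -> R) := fun j => Binomial.C (j + k)%nat k * q (j + k)%nat.

Lemma fk_nonneg k q : (forall n, 0 <= q n) -> forall j, 0 <= fk k q j.
Proof. intros H j; unfold fk; apply Rmult_le_pos; [apply C_nonneg|apply H]. Qed.

Lemma a_of_series p k r : is_series (fk k p) r -> a_of p k = Finite (/ (INR k + 1) * r).
Proof.
intros H. unfold a_of. change (fun j => Binomial.C (j + k) k * p (j + k)%nat) with (fk k p). rewrite (is_lim_seq_unique (sum_n (fk k p)) r H). reflexivity.
Qed.

Lemma P_facts al de q : P_ad al de q ->
  (forall k, 0 <= q k) /\ is_series q 1 /\ is_series (fk 1 q) (2 * al) /\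
  forall k, (2 <= k)%nat -> exists r : R, is_series (fk k q) r /\ 0 <= r <= (INR k + 1) * de ^ k.
Proof.
intros [[Hn Hs] [H0 [H1 Hk]]].
split; [exact Hn|]. split; [exact Hs|]. split.
- destruct (A1 (fk 1 q) 1 (Finite al) (fk_nonneg 1 q Hn) H1) as [r [Hr E]]; [discriminate|].
  injection E as E. simpl in E. replace (2 * al) with r; auto.
  rewrite E. field.
- intros k hk. destruct (Hk k hk) as [h1 h2].
  destruct (A1 (fk k q) k (a_of q k) (fk_nonneg k q Hn) eq_refl) as [r [Hr E]].
  { intros E; rewrite E in h2; simpl in h2; exact h2. }
  exists r; split; auto. rewrite E in h1, h2; simpl in h1, h2.
  assert (hk1 : 0 < INR k + 1) by (pose proof (pos_INR k); lra).
  assert (hi : 0 < / (INR k + 1)) by (apply Rinv_0_lt_compat; lra).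
  split.
  + apply Rmult_le_reg_l with (/ (INR k + 1)); lra.
  + apply Rmult_le_reg_l with (/ (INR k + 1)); auto.
    replace (/ (INR k + 1) * ((INR k + 1) * de ^ k)) with (de ^ k) by (field; lra). exact h2.
Qed.

Lemma tail_gen (u v : nat -> R) (c : R) (M : nat) :
  (forall n, 0 <= u n) -> (forall n, 0 <= v n) -> 0 <= c ->
  (forall j, (M < S j)%nat -> u (S j) <= c * v j) ->
  forall K, sum_n u (S K) <= sum_n u M + c * sum_n v K.
Proof.
intros Hu Hv Hc H K. induction K as [|K IH].
- rewrite sum_n_SnR, (sum_O v).
  destruct M as [|M].
  + rewrite sum_O. assert (h := H 0%nat ltac:(lia)). lra.
  + assert (h := sum_n_mono u 1 (S M) Hu ltac:(lia)). rewrite sum_n_SnR in h.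
    assert (0 <= c * v 0%nat) by (apply Rmult_le_pos; auto). lra.
- assert (hv : 0 <= c * sum_n v (S K)) by (apply Rmult_le_pos; auto; apply sum_n_nonneg; auto).
  destruct (Nat.lt_ge_cases M (S (S K))) as [hl|hl].
  + rewrite sum_n_SnR. rewrite (sum_n_SnR v). assert (h := H (S K) hl). lra.
  + assert (h := sum_n_mono u (S (S K)) M Hu hl). lra.
Qed.

Lemma inv_lim : is_lim_seq (fun M => / (INR M + 1)) 0.
Proof.
assert (h : is_lim_seq (fun M => INR M + 1) p_infty).
{ apply is_lim_seq_ext with (fun M => INR (S M)). intros; apply S_INR.
  apply (is_lim_seq_incr_1 INR p_infty). apply is_lim_seq_INR. }
assert (h2 := is_lim_seq_inv _ _ h ltac:(discriminate)). exact h2.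
Qed.

Lemma squeeze (s : nat -> R) (L C : R) :
  (forall M, L - C * / (INR M + 1) <= s M <= L) -> is_lim_seq s L.
Proof.
intros H. apply is_lim_seq_le_le with (fun M => L - C * / (INR M + 1)) (fun _ => L); auto.
- replace (Finite L) with (Finite (L - C * 0)) by (f_equal; ring).
  apply is_lim_seq_minus'. apply is_lim_seq_const.
  apply (is_lim_seq_scal_l _ C 0 inv_lim).
- apply is_lim_seq_const.
Qed.

Lemma partial_le_one q n : (forall k, 0 <= q k) -> is_series q 1 -> sum_n q n <= 1.
Proof. intros; apply series_ge_partial; auto. Qed.

Lemma coord_le_one q k : (forall k, 0 <= q k) -> is_series q 1 -> 0 <= q k <= 1.
Proof.
intros Hn Hs. split; auto. eapply Rle_trans; [|apply (partial_le_one q k Hn Hs)].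
destruct k as [|k]. rewrite sum_O; lra. rewrite sum_n_SnR.
assert (h := sum_n_nonneg q k Hn). lra.
Qed.

Lemma closed_P al de p : 0 < al -> in_clos (P_ad al de) p -> P_ad al de p.
Proof.
intros Ha Hc.
assert (Hn : forall k, 0 <= p k).
{ intros k. apply (clos_ge _ p (fun q => q k) 0 Hc (coord_cont k p)).
  intros q Pq. destruct (P_facts _ _ _ Pq) as [h _]. apply h. }
assert (Gs0 : forall q M, sum_n q M = G_lin (fun _ => 1) 0 M q).
{ intros q M; unfold G_lin; apply sum_n_ext; intros j; rewrite Nat.add_0_r; symmetry; apply Rmult_1_l. }
assert (Hs : is_series p 1).
{ apply (squeeze (sum_n p) 1 (2*al)). intros M. rewrite Gs0. split.
  - apply (clos_ge _ p (G_lin (fun _ => 1) 0 M) _ Hc (lin_cont _ _ _ p)).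
    intros q Pq. rewrite <- Gs0.
    destruct (P_facts _ _ _ Pq) as [qn [qs [q1 _]]].
    set (c := / (INR M + 1)).
    assert (hM0 : 0 < INR M + 1) by (pose proof (pos_INR M); lra).
    assert (hc : 0 < c) by (apply Rinv_0_lt_compat; lra).
    assert (hc1 : c * (INR M + 1) = 1) by (unfold c; field; lra).
    assert (Hcond : forall j, (M < S j)%nat -> q (S j) <= c * fk 1 q j).
    { intros j hj. unfold fk. rewrite C_1. replace (j+1)%nat with (S j) by lia.
      assert (hM : INR M <= INR j) by (apply le_INR; lia).
      assert (hq : 0 <= q (S j)) by auto.
      assert (hh : 0 <= c * q (S j) * (INR j - INR M)) by (apply Rmult_le_pos; [apply Rmult_le_pos|]; lra).
      assert (E : c * ((INR j + 1) * q (S j)) = c * q (S j) * (INR j - INR M) + (c * (INR M + 1)) * q (S j)) by ring.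
      rewrite E, hc1. lra. }
    assert (ht := tail_gen q (fk 1 q) c M qn (fk_nonneg 1 q qn) (Rlt_le _ _ hc) Hcond).
    assert (hl : 1 <= sum_n q M + c * (2 * al)).
    { apply (lim_le_bound (fun K => sum_n q (S K))).
      - apply (is_lim_seq_incr_1 (sum_n q) 1). exact qs.
      - intros K. assert (h := series_ge_partial _ _ K (fk_nonneg 1 q qn) q1).
        specialize (ht K). nra. }
    nra.
  - apply (clos_le _ p (G_lin (fun _ => 1) 0 M) _ Hc (lin_cont _ _ _ p)).
    intros q Pq. rewrite <- Gs0.
    destruct (P_facts _ _ _ Pq) as [qn [qs _]]. apply partial_le_one; auto. }
assert (H1 : is_series (fk 1 p) (2 * al)).
{ apply (squeeze (sum_n (fk 1 p)) (2 * al) (6 * de ^ 2)). intros M.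
  change (sum_n (fk 1 p) M) with (G_lin (fun j => Binomial.C (j + 1) 1) 1 M p). split.
  - apply (clos_ge _ p _ _ Hc (lin_cont _ _ _ p)).
    intros q Pq. change (G_lin (fun j => Binomial.C (j + 1) 1) 1 M q) with (sum_n (fk 1 q) M).
    destruct (P_facts _ _ _ Pq) as [qn [qs [q1 qk]]].
    destruct (qk 2%nat ltac:(lia)) as [r2 [hr2 [_ hr2b]]].
    set (c := / (INR M + 1)).
    assert (hM0 : 0 < INR M + 1) by (pose proof (pos_INR M); lra).
    assert (hc : 0 < c) by (apply Rinv_0_lt_compat; lra).
    assert (hc1 : c * (INR M + 1) = 1) by (unfold c; field; lra).
    assert (Hcond : forall j, (M < S j)%nat -> fk 1 q (S j) <= (2 * c) * fk 2 q j).
    { intros j hj. unfold fk. rewrite C_1, C_2. replace (S j + 1)%nat with (j + 2)%nat by lia.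
      rewrite S_INR.
      assert (hM : INR M <= INR j) by (apply le_INR; lia).
      assert (hq : 0 <= q (j + 2)%nat) by auto.
      assert (h1 : 1 <= c * (INR j + 1)) by nra.
      assert (hj0 : 0 <= INR j) by apply pos_INR.
      assert (h2 : 0 <= (INR j + 2) * q (j + 2)%nat * (c * (INR j + 1) - 1)) by
        (apply Rmult_le_pos; [apply Rmult_le_pos|]; lra).
      nra. }
    assert (ht := tail_gen (fk 1 q) (fk 2 q) (2 * c) M (fk_nonneg 1 q qn) (fk_nonneg 2 q qn) ltac:(lra) Hcond).
    assert (hl : 2 * al <= sum_n (fk 1 q) M + (2 * c) * ((INR 2 + 1) * de ^ 2)).
    { apply (lim_le_bound (fun K => sum_n (fk 1 q) (S K))).
      - apply (is_lim_seq_incr_1 (sum_n (fk 1 q)) (2 * al)). exact q1.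
      - intros K. assert (h := series_ge_partial _ _ K (fk_nonneg 2 q qn) hr2).
        specialize (ht K). nra. }
    simpl (INR 2) in hl. nra.
  - apply (clos_le _ p _ _ Hc (lin_cont _ _ _ p)).
    intros q Pq. change (G_lin (fun j => Binomial.C (j + 1) 1) 1 M q) with (sum_n (fk 1 q) M).
    destruct (P_facts _ _ _ Pq) as [qn [qs [q1 _]]].
    apply series_ge_partial; auto. apply fk_nonneg; auto. }
split; [split; auto|]. split; [|split].
- rewrite (a_of_series p 0 1).
  + f_equal. simpl. field.
  + apply is_series_ext with p; auto. intros j. unfold fk. rewrite Nat.add_0_r, C_n_0. symmetry; apply Rmult_1_l.
- rewrite (a_of_series p 1 (2 * al) H1). f_equal. simpl. field.
- intros k hk.
  assert (Hb : forall M, sum_n (fk k p) M <= (INR k + 1) * de ^ k).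
  { intros M. change (sum_n (fk k p) M) with (G_lin (fun j => Binomial.C (j + k) k) k M p).
    apply (clos_le _ p _ _ Hc (lin_cont _ _ _ p)). intros q Pq.
    change (G_lin (fun j => Binomial.C (j + k) k) k M q) with (sum_n (fk k q) M).
    destruct (P_facts _ _ _ Pq) as [qn [_ [_ qk]]].
    destruct (qk k hk) as [r [hr [_ hr2]]].
    eapply Rle_trans; [apply series_ge_partial; [apply fk_nonneg; auto| exact hr]| exact hr2]. }
  destruct (bounded_series (fk k p) _ (fk_nonneg k p Hn) Hb) as [r hr].
  rewrite (a_of_series p k r hr). simpl.
  assert (hr0 : 0 <= r).
  { eapply Rle_trans; [apply (sum_n_nonneg (fk k p) 0 (fk_nonneg k p Hn))|].
    apply series_ge_partial; auto. apply fk_nonneg; auto. }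
  assert (hrb := series_le_bound _ _ _ hr Hb).
  assert (hk1 : 0 < INR k + 1) by (pose proof (pos_INR k); lra).
  assert (hi : 0 < / (INR k + 1)) by (apply Rinv_0_lt_compat; lra).
  split.
  + apply Rmult_le_pos; lra.
  + replace (de ^ k) with (/ (INR k + 1) * ((INR k + 1) * de ^ k)) by (field; lra).
    apply Rmult_le_compat_l; lra.
Qed.

Lemma series_comb (a b : nat -> R) la lb t s :
  is_series a la -> is_series b lb -> is_series (fun n => t * a n + s * b n) (t * la + s * lb).
Proof.
intros Ha Hb. exact (is_series_plus _ _ _ _ (is_series_scal t _ _ Ha) (is_series_scal s _ _ Hb)).
Qed.

Lemma fk0_series q : is_series q 1 -> is_series (fk 0 q) 1.
Proof.
intros H. apply is_series_ext with q; auto. intros j. unfold fk.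
rewrite Nat.add_0_r, C_n_0. symmetry; apply Rmult_1_l.
Qed.

Lemma a_bounds x k r de : is_series (fk k x) r -> 0 <= r <= (INR k + 1) * de ^ k ->
  Rbar_le (Finite 0) (a_of x k) /\ Rbar_le (a_of x k) (Finite (de ^ k)).
Proof.
intros hr [hr0 hrb].
rewrite (a_of_series x k r hr). simpl.
assert (hk1 : 0 < INR k + 1) by (pose proof (pos_INR k); lra).
assert (hi : 0 < / (INR k + 1)) by (apply Rinv_0_lt_compat; lra).
split.
+ apply Rmult_le_pos; lra.
+ replace (de ^ k) with (/ (INR k + 1) * ((INR k + 1) * de ^ k)) by (field; lra).
  apply Rmult_le_compat_l; lra.
Qed.

Lemma convex_P al de : convex_set (P_ad al de).
Proof.
intros p q t Pp Pq Ht.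
destruct (P_facts _ _ _ Pp) as [pn [ps [p1 pk]]].
destruct (P_facts _ _ _ Pq) as [qn [qs [q1 qk]]].
set (r := fun k => t * p k + (1 - t) * q k).
assert (Efk : forall k, fk k r = fun j => t * fk k p j + (1 - t) * fk k q j).
{ intros k. apply functional_extensionality. intros j. unfold fk, r. ring. }
assert (rn : forall k, 0 <= r k).
{ intros k. unfold r. specialize (pn k); specialize (qn k). nra. }
assert (rs : is_series r 1).
{ replace 1 with (t * 1 + (1 - t) * 1) by ring. apply series_comb; auto. }
split; [split; auto|]. split; [|split].
- rewrite (a_of_series r 0 1 (fk0_series r rs)). f_equal. simpl. field.
- assert (h : is_series (fk 1 r) (2 * al)).
  { rewrite Efk. replace (2 * al) with (t * (2 * al) + (1 - t) * (2 * al)) by ring.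
    apply series_comb; auto. }
  rewrite (a_of_series r 1 (2 * al) h). f_equal. simpl. field.
- intros k hk.
  destruct (pk k hk) as [rp [hp hpb]]. destruct (qk k hk) as [rq [hq hqb]].
  apply (a_bounds r k (t * rp + (1 - t) * rq)).
  + rewrite Efk. apply series_comb; auto.
  + split; nra.
Qed.

Lemma sum_le_const (g : nat -> R) e n : (forall k, (k <= n)%nat -> g k <= e) -> sum_n g n <= INR (S n) * e.
Proof.
induction n as [|n IH]; intros H.
- rewrite sum_O. simpl. assert (h := H 0%nat ltac:(lia)). lra.
- rewrite sum_n_SnR, (S_INR (S n)). assert (h := H (S n) ltac:(lia)).
  assert (h2 := IH ltac:(intros; apply H; lia)). lra.
Qed.

Lemma sum_diff_le (p q : nat -> R) n : sum_n p n - sum_n q n <= sum_n (fun k => Rabs (p k - q k)) n.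
Proof.
induction n as [|n IH].
- rewrite !sum_O. apply Rle_abs.
- rewrite !sum_n_SnR. assert (h := Rle_abs (p (S n) - q (S n))). lra.
Qed.

Lemma tail_abs (p q : nat -> R) N : (forall k, 0 <= p k) -> (forall k, 0 <= q k) ->
  forall d, sum_n (fun k => Rabs (p k - q k)) (N + d) <=
    sum_n (fun k => Rabs (p k - q k)) N + (sum_n p (N + d) - sum_n p N) + (sum_n q (N + d) - sum_n q N).
Proof.
intros pn qn d. induction d as [|d IH].
- rewrite Nat.add_0_r. lra.
- rewrite Nat.add_succ_r, !sum_n_SnR.
  assert (h : Rabs (p (S (N + d)) - q (S (N + d))) <= p (S (N + d)) + q (S (N + d))).
  { apply Rabs_le. specialize (pn (S (N + d))); specialize (qn (S (N + d))). lra. }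
  lra.
Qed.

Lemma l1_approx al de p eps : P_ad al de p -> 0 < eps ->
  exists N eta, 0 < eta /\ forall q, P_ad al de q ->
    (forall k, (k < N)%nat -> Rabs (q k - p k) < eta) -> l1ball p eps q.
Proof.
intros Pp he.
destruct (P_facts _ _ _ Pp) as [pn [ps _]].
assert (hl := proj2 (is_lim_seq_spec (sum_n p) 1) ps).
destruct (hl (mkposreal (eps / 4) ltac:(lra))) as [N0 HN0]. simpl in HN0.
specialize (HN0 N0 (le_n _)).
assert (hT0 : sum_n p N0 <= 1) by (apply partial_le_one; auto).
apply Rabs_def2 in HN0.
assert (hSN : 0 < INR (S N0)) by (apply lt_0_INR; lia).
exists (S N0), (eps / (8 * INR (S N0))). split.
{ apply Rdiv_lt_0_compat; lra. }
intros q Pq Hq.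
destruct (P_facts _ _ _ Pq) as [qn [qs _]].
set (eta := eps / (8 * INR (S N0))).
set (g := fun k => Rabs (p k - q k)).
assert (hg0 : sum_n g N0 <= INR (S N0) * eta).
{ apply sum_le_const. intros k hk. unfold g. rewrite Rabs_minus_sym. left; apply Hq; lia. }
assert (hne : INR (S N0) * eta = eps / 8) by (unfold eta; field; lra).
assert (hpq := sum_diff_le p q N0).
set (c := sum_n g N0 + (1 - sum_n p N0) + (1 - sum_n q N0)).
assert (Hb : forall M, sum_n g M <= c).
{ intros M. destruct (Nat.le_gt_cases M N0) as [hM|hM].
  - assert (h := sum_n_mono g M N0 ltac:(intros; apply Rabs_pos) hM).
    assert (h1 := partial_le_one q N0 qn qs). unfold c. lra.
  - replace M with (N0 + (M - N0))%nat by lia.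
    assert (h := tail_abs p q N0 pn qn (M - N0)). fold g in h.
    assert (h1 := partial_le_one p (N0 + (M - N0)) pn ps).
    assert (h2 := partial_le_one q (N0 + (M - N0)) qn qs).
    unfold c. lra. }
destruct (bounded_series g c ltac:(intros; apply Rabs_pos) Hb) as [s hs].
exists s. split; [exact hs|].
assert (hsc := series_le_bound _ _ _ hs Hb).
unfold c in hsc. fold g in hpq. lra.
Qed.

Theorem proposition7 (alpha delta : R) (Ha : 0 < alpha) (Had : alpha <= delta) :
  l1_compact (P_ad alpha delta) /\ convex_set (P_ad alpha delta).
Proof.
split; [|apply convex_P].
intros I U Hop Hcov.
apply (Topo.topo_compact (P_ad alpha delta)).
- intros q Pq k. destruct (P_facts _ _ _ Pq) as [qn [qs _]]. apply coord_le_one; auto.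
- intros p Hp. apply closed_P; auto.
- intros p Pp. destruct (Hcov p Pp) as [i Hi].
  destruct (Hop i p Hi) as [eps [he Hb]].
  destruct (l1_approx alpha delta p eps Pp he) as [N [eta [heta H]]].
  exists i, N, eta. split; auto.
Qed.
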